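(* Let $\{\ket{j}\}_{j=0}^{7}$ be the computational basis of three qubits, where $\ket{j}=\ket{j_1j_2j_3}$ with $j=4j_1+2j_2+j_3$, and let $$\ket{\psi_1}=\frac{1}{2\sqrt{2}}\left(\ket{0}+\ket{1}+\ket{2}+\ket{3}+\ket{4}+\ket{5}+\ket{6}-\ket{7}\right),\qquad \rho_1=\ket{\psi_1}\bra{\psi_1}.$$ Denote by $A_1,B_1,C_1$ the first, second and third qubits of $\rho_1$. Then $$D(B_1C_1|A_1)=D(A_1C_1|B_1)=D(A_1B_1|C_1)=D(C_1|A_1B_1)=D(B_1|A_1C_1)=D(A_1|B_1C_1)=-\tfrac{1}{4}\log\tfrac{1}{4}-\tfrac{3}{4}\log\tfrac{3}{4}\approx 0.81.$$
   Context: Logarithms are base 2, and $S(\sigma)=-\mathrm{Tr}(\sigma\log\sigma)$ is the von Neumann entropy. For a state $\rho_{XY}$ on a bipartite system $X\otimes Y$ (here $X$ and $Y$ are complementary groups of the three qubits), the quantum discord with measurement on $X$ is $$D(Y|X)=\min_{\{E_a\}}\sum_a p_a S(\rho_{Y|a})+S(\rho_X)-S(\rho_{XY}),$$ where the minimum is over all POVMs $\{E_a\}$ on $X$ ($E_a\ge 0$, $\sum_a E_a=I$), $p_a=\mathrm{Tr}((E_a\otimes I)\rho_{XY})$, $\rho_{Y|a}=\mathrm{Tr}_X((E_a\otimes I)\rho_{XY})/p_a$, and $\rho_X,\rho_Y$ are reduced states. For example $D(B_1C_1|A_1)$ is the discord of $\rho_1$ viewed as a state on $A_1\otimes (B_1C_1)$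 with measurement on $A_1$, and $D(C_1|A_1B_1)$ is the discord with measurement on $A_1B_1$. *)

(* Defs.v *)
From HB Require Import structures.
From mathcomp Require Import all_boot all_order all_algebra.
From mathcomp Require Import complex mxtens.
From mathcomp Require Import boolp classical_sets reals exp.

Set Implicit Arguments.
Unset Strict Implicit.
Unset Printing Implicit Defensive.

Import Order.TTheory GRing.Theory Num.Theory.
Local Open Scope ring_scope.

Section QuantumDiscord.
Variable R : realType.
Local Notation C := R[i].

Definition rC (x : R) : C := Complex x 0.

Definition adjmx m n (A : 'M[C]_(m, n)) : 'M[C]_(n, m) := map_mx Num.conj A^T.

Definition log2 (x : R) : R := ln x / ln 2.
Definition xlog2x (x : R) : R := if x == 0 then 0 else x * log2 x.

(** s is the list of eigenvalues (with multiplicity) of A, all real *)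
Definition spectrum n (A : 'M[C]_n) (s : seq R) : Prop :=
  char_poly A = \prod_(x <- s) ('X - (rC x)%:P).

(** von Neumann entropy S(A) = - Tr (A log A) = - sum_i l_i log l_i
    over the eigenvalues l_i of the (Hermitian) matrix A *)
Definition vN_entropy n (A : 'M[C]_n) : R :=
  - \sum_(x <- xget [::] [set s | spectrum A s]) xlog2x x.

Definition psd n (A : 'M[C]_n) : Prop :=
  adjmx A = A /\ forall v : 'cV[C]_n, 0 <= (adjmx v *m A *m v) 0 0.

Definition povm m k (E : 'I_k -> 'M[C]_m) : Prop :=
  (forall a, psd (E a)) /\ \sum_(a < k) E a = 1%:M.

(** partial traces on C^m (x) C^n (Kronecker index convention of tensmx:
    the pair (i,k) has index i * n + k) *)
Definition ptrace1 m n (A : 'M[C]_(m * n)) : 'M[C]_n :=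
  \matrix_(k, l) \sum_(i < m) A (mxtens_index (i, k)) (mxtens_index (i, l)).
Definition ptrace2 m n (A : 'M[C]_(m * n)) : 'M[C]_m :=
  \matrix_(i, j) \sum_(k < n) A (mxtens_index (i, k)) (mxtens_index (j, k)).

(** p_a S(rho_{Y|a}) for one POVM element E_a on X = C^m *)
Definition cond_term m n (rho : 'M[C]_(m * n)) (Ea : 'M[C]_m) : R :=
  let M := (tensmx Ea (1%:M : 'M[C]_n)) *m rho in
  let p := \tr M in
  complex.Re p * vN_entropy (p^-1 *: ptrace1 M).

(** quantum discord D(Y|X) of rho on X (x) Y = C^m (x) C^n, measurement on X;
    the minimum over POVMs (any finite number of outcomes) is taken as inf *)
Definition discord m n (rho : 'M[C]_(m * n)) : R :=
  inf [set x : R | exists k (E : 'I_k -> 'M[C]_m),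
                     povm E /\ x = \sum_(a < k) cond_term rho (E a)]
  + vN_entropy (ptrace2 rho) - vN_entropy rho.

(** three qubits: basis |j> = |j1 j2 j3>, j = 4 j1 + 2 j2 + j3;
    bit j q = j_(q+1) for q = 0,1,2 *)
Definition bit (j q : nat) : nat := (j %/ 2 ^ (2 - q)) %% 2.

(** reordering of the qubits: new qubit q is old qubit s q *)
Definition reorder_idx (s : nat -> nat) (j : 'I_8) : 'I_8 :=
  inord (\sum_(q < 3) bit j q * 2 ^ (2 - s q)).
Definition reorder (s : nat -> nat) (rho : 'M[C]_8) : 'M[C]_8 :=
  \matrix_(i, j) rho (reorder_idx s i) (reorder_idx s j).

Definition psi1 : 'cV[C]_8 :=
  \col_(j < 8) rC ((if j == 7 :> nat then -1 else 1) / (2 * Num.sqrt 2)).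
Definition rho1 : 'M[C]_8 := psi1 *m adjmx psi1.

End QuantumDiscord.

(** orders of the qubits (A,B,C) = (0,1,2) with the measured group first *)
Definition ord_ABC (q : nat) : nat := nth 0 [:: 0; 1; 2] q.
Definition ord_BAC (q : nat) : nat := nth 0 [:: 1; 0; 2] q.
Definition ord_CAB (q : nat) : nat := nth 0 [:: 2; 0; 1] q.
Definition ord_ACB (q : nat) : nat := nth 0 [:: 0; 2; 1] q.
Definition ord_BCA (q : nat) : nat := nth 0 [:: 1; 2; 0] q.

(* Main.v *)
Require Import Defs.
From HB Require Import structures.
From mathcomp Require Import all_boot all_order all_algebra.
From mathcomp Require Import complex mxtens.
From mathcomp Require Import boolp classical_sets reals exp.
From mathcomp Require Import ring lra.
Import Order.TTheory GRing.Theory Num.Theory.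
Local Open Scope ring_scope.
Set Implicit Arguments.
Unset Strict Implicit.
Unset Printing Implicit Defensive.

Section Gen.
Variable R : realType.
Local Notation C := R[i].

Lemma rC_inj : injective (@rC R). Proof. by move=> x y []. Qed.

Lemma entropy_spec n (A : 'M[C]_n) s : spectrum A s ->
  vN_entropy A = - \sum_(x <- s) xlog2x x.
Proof.
move=> Hs; rewrite /vN_entropy; congr (- _).
have Ht : spectrum A (xget [::] [set s | spectrum A s]) by apply: (xgetI [::] (P := [set s | spectrum A s])) Hs.
move: Ht; set t := xget _ _ => Ht.
apply: perm_big.
apply: (perm_map_inj (@rC_inj)).
apply: prod_XsubC_eq; rewrite !big_map; rewrite /spectrum in Hs Ht.
by rewrite -Ht -Hs.
Qed.

Lemma charpolyAB n r (A : 'M[C]_(n, r)) (B : 'M[C]_(r, n)) :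
  'X^r * char_poly (A *m B) = 'X^n * char_poly (B *m A).
Proof.
pose a := map_mx (@polyC C) A; pose b := map_mx (@polyC C) B.
pose M := block_mx ('X%:M : 'M_n) a b (1%:M : 'M_r).
have E1 : block_mx 1%:M (-a) 0 1%:M *m M = block_mx (char_poly_mx (A *m B)) 0 b 1%:M.
  rewrite mulmx_block !mul1mx !mul0mx !add0r mulNmx mulmx1 addrN.
  by rewrite /char_poly_mx map_mxM.
have E2 : block_mx 1%:M 0 (-b) ('X%:M) *m M = block_mx ('X%:M) a 0 (char_poly_mx (B *m A)).
  rewrite mulmx_block !mul1mx !mul0mx !addr0 mulNmx mul_mx_scalar mul_scalar_mx addNr.
  by rewrite /char_poly_mx map_mxM mulmx1 addrC mulNmx.
have := congr1 determinant E2; rewrite det_mulmx det_lblock det_ublock !det_scalar.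
have := congr1 determinant E1; rewrite det_mulmx det_lblock det_ublock !det1 !mul1r mulr1.
by move=> ->; rewrite expr1n mul1r => ->.
Qed.


Lemma charpoly_rank1 n (u : 'M[C]_(n.+1,1)) (v : 'M[C]_(1,n.+1)) :
  char_poly (u *m v) = 'X^n * ('X - (\tr (u *m v))%:P).
Proof.
apply: (@mulfI _ 'X); first by rewrite polyX_eq0.
have := charpolyAB u v; rewrite expr1 exprS -mulrA => ->; congr (_ * (_ * _)).
by rewrite mxtrace_mulC trace_mx11 /char_poly det_mx11 !mxE eqxx mulr1n.
Qed.

Lemma charpoly_dr d r (A : 'M[C]_(d + r, r)) (B : 'M[C]_(r, d + r)) :
  char_poly (A *m B) = 'X^d * char_poly (B *m A).
Proof.
apply: (@mulfI _ ('X^r)); first by rewrite expf_neq0 // polyX_eq0.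
by rewrite charpolyAB exprD mulrA [_ * 'X^r]mulrC.
Qed.

Lemma charpoly2 (A : 'M[C]_2) :
  char_poly A = ('X - (A 0 0)%:P) * ('X - (A 1 1)%:P) - (A 0 1 * A 1 0)%:P.
Proof.
rewrite /char_poly (expand_det_row _ 0) !big_ord_recl big_ord0 /cofactor !det_mx11 !mxE /=.
have -> : lift 0 0 = 1 :> 'I_2 by apply/val_inj.
have -> : lift 1 0 = 0 :> 'I_2 by apply/val_inj.
rewrite polyCM mulr1n mulr0n !add0r addr0 expr0 expr1 mul1r.
ring.
Qed.

Lemma rC0 : rC 0 = 0 :> C. Proof. by []. Qed.
Lemma rC1 : rC 1 = 1 :> C. Proof. by []. Qed.

Lemma xlog2x0 : xlog2x (0 : R) = 0. Proof. by rewrite /xlog2x eqxx. Qed.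
Lemma xlog2x1 : xlog2x (1 : R) = 0.
Proof. by rewrite /xlog2x oner_eq0 mul1r /log2 ln1 mul0r. Qed.

Lemma prod_nseq0 n : \prod_(x <- nseq n (0:R)) ('X - (rC x)%:P) = 'X^n :> {poly C}.
Proof.
elim: n => [|n IH]; first by rewrite big_nil expr0.
by rewrite /= big_cons IH rC0 subr0 exprS.
Qed.

Lemma sum_nseq0 n : \sum_(x <- nseq n (0:R)) xlog2x x = 0.
Proof.
elim: n => [|n IH]; first by rewrite big_nil.
by rewrite /= big_cons IH xlog2x0 addr0.
Qed.

Lemma entropy_rank1 n (u : 'M[C]_(n.+1,1)) v t :
  \tr (u *m v) = rC t -> (t = 0 \/ t = 1) -> vN_entropy (u *m v) = 0.
Proof.
move=> Ht H01.
rewrite (@entropy_spec _ _ (t :: nseq n 0)).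
  by rewrite big_cons sum_nseq0 addr0; case: H01 => ->; rewrite ?xlog2x0 ?xlog2x1 oppr0.
by rewrite /spectrum charpoly_rank1 big_cons prod_nseq0 Ht mulrC.
Qed.


Definition Psi m n (psi : 'cV[C]_(m * n)) : 'M[C]_(m, n) :=
  \matrix_(j, k) psi (mxtens_index (j, k)) 0.

Lemma sum_tens m n (F : 'I_(m * n) -> C) :
  \sum_x F x = \sum_(j < m) \sum_(k < n) F (mxtens_index (j, k)).
Proof.
rewrite (reindex (@mxtens_index m n)) /=; last first.
  by exists (@mxtens_unindex m n) => i _; rewrite (mxtens_indexK, mxtens_unindexK).
rewrite pair_big /=; apply: eq_bigr => -[j k] _ //.
Qed.

Lemma ptrace1_formula m n (E : 'M[C]_m) (psi : 'cV[C]_(m * n)) :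
  ptrace1 ((tensmx E (1%:M : 'M[C]_n)) *m (psi *m adjmx psi)) =
  (Psi psi)^T *m E^T *m map_mx Num.conj (Psi psi).
Proof.
apply/matrixP => k l; rewrite !mxE.
apply: eq_bigr => i _; rewrite !mxE sum_tens mulr_suml; apply: eq_bigr => j _.
rewrite (bigD1 k) //= big1 ?addr0.
  rewrite tensmxE !mxE big_ord1 !mxE eqxx mulr1n mulr1; ring.
by move=> k' Hk'; rewrite tensmxE !mxE eq_sym (negbTE Hk') mulr0n mulr0 mul0r.
Qed.


Definition form n (A : 'M[C]_n) (v : 'cV[C]_n) : C := (adjmx v *m A *m v) 0 0.

Lemma adjmxM m n p (A : 'M[C]_(m, n)) (B : 'M[C]_(n, p)) :
  adjmx (A *m B) = adjmx B *m adjmx A.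
Proof. by rewrite /adjmx trmx_mul map_mxM. Qed.

Lemma adjmxK m n (A : 'M[C]_(m, n)) : adjmx (adjmx A) = A.
Proof. by apply/matrixP => i j; rewrite !mxE conjCK. Qed.

Lemma adjmx_conj m n (A : 'M[C]_(m, n)) : adjmx (map_mx Num.conj A) = A^T.
Proof. by apply/matrixP => i j; rewrite !mxE conjCK. Qed.

Lemma form_tr n (E : 'M[C]_n) w : form (E^T) w = form E (map_mx Num.conj w).
Proof.
rewrite /form; transitivity ((adjmx w *m E^T *m w)^T 0 0); first by rewrite [RHS]mxE.
rewrite !trmx_mul trmxK mulmxA adjmx_conj.
suff -> : (adjmx w)^T = map_mx Num.conj w by [].
by apply/matrixP => i j; rewrite !mxE.
Qed.

Lemma form_P m n (E : 'M[C]_m) (Q : 'M[C]_(m, n)) v :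
  form (Q^T *m E^T *m map_mx Num.conj Q) v = form (E^T) (map_mx Num.conj Q *m v).
Proof. by rewrite /form adjmxM adjmx_conj !mulmxA. Qed.

Lemma formZ n c (A : 'M[C]_n) v : form (c *: A) v = c * form A v.
Proof. by rewrite /form -scalemxAr -scalemxAl [LHS]mxE. Qed.

Lemma form_delta n (A : 'M[C]_n) k : form A (delta_mx k 0) = A k k.
Proof.
rewrite /form !mxE (bigD1 k) //= big1 ?addr0.
  rewrite !mxE (bigD1 k) //= big1 ?addr0; last first.
    by move=> i /negbTE Hi; rewrite !mxE Hi /= conjC0 mul0r.
  by rewrite !mxE !eqxx /= conjC1 mul1r mulr1.
by move=> i /negbTE Hi; rewrite !mxE Hi /= mulr0.
Qed.

Lemma trace_form n (A : 'M[C]_n) : \tr A = \sum_k form A (delta_mx k 0).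
Proof. by apply: eq_bigr => k _; rewrite form_delta. Qed.

Lemma psd_trace_ge0 n (A : 'M[C]_n) : (forall v, 0 <= form A v) -> 0 <= \tr A.
Proof. by move=> H; rewrite trace_form sumr_ge0. Qed.


Lemma rCD (x y : R) : rC (x + y) = rC x + rC y.
Proof. by rewrite /rC; apply/eqP; rewrite eq_complex /= addr0 !eqxx. Qed.

Lemma rC_sum (s : seq R) : \sum_(x <- s) rC x = rC (\sum_(x <- s) x).
Proof.
elim: s => [|a s IH]; first by rewrite !big_nil.
by rewrite !big_cons IH rCD.
Qed.

Lemma spectrum_trace n (A : 'M[C]_n.+1) s : spectrum A s ->
  \tr A = rC (\sum_(x <- s) x).
Proof.
move=> Hs.
have Hsz : size s = n.+1.
  have := size_char_poly A; rewrite Hs size_prod_XsubC; by case.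
have := char_poly_trace A isT; rewrite /= Hs -(big_map (@rC R) xpredT (fun y => 'X - y%:P)).
rewrite [X in _`_X = _ -> _](_ : n = (size (map (@rC R) s)).-1); last by rewrite size_map Hsz.
rewrite coefPn_prod_XsubC; last by rewrite size_map Hsz.
by move/eqP; rewrite eqr_opp => /eqP <-; rewrite big_map rC_sum.
Qed.

Lemma spectrum_ge0 n (A : 'M[C]_n) s : (forall v, 0 <= form A v) -> spectrum A s ->
  forall x, x \in s -> 0 <= x.
Proof.
move=> HA Hs x xs.
have : eigenvalue A (rC x).
  rewrite eigenvalue_root_char Hs -(big_map (@rC R) xpredT (fun y => 'X - y%:P)).
  by rewrite root_prod_XsubC map_f.
case/eigenvalueP => v Hv vn0.
have := HA (adjmx v); rewrite /form adjmxK Hv -scalemxAl [X in 0 <= X]mxE.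
have Hpos : 0 < (v *m adjmx v) 0 0.
  rewrite lt_def; apply/andP; split; last first.
    by rewrite mxE sumr_ge0 // => i _; rewrite mxE mxE mul_conjC_ge0.
  apply/negP => /eqP H0; suff Hv0 : v = 0 by rewrite Hv0 eqxx in vn0.
  apply/matrixP => i j.
  rewrite (ord1 i) !mxE.
  have H : \sum_(k < n) v 0 k * (v 0 k)^* = 0.
    by rewrite -[RHS]H0 [RHS]mxE; apply: eq_bigr => k _; rewrite !mxE.
  have := psumr_eq0P _ H; move=> /(_ (fun k _ => mul_conjC_ge0 _)) H2.
  by apply/eqP; rewrite -mul_conjC_eq0; apply/eqP; apply: H2.
by rewrite (pmulr_lge0 _ Hpos) lecE /= => /andP[_].
Qed.


Lemma xlog2x_le0 (x : R) : 0 <= x -> x <= 1 -> xlog2x x <= 0.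
Proof.
move=> x0 x1; rewrite /xlog2x; case: eqP => // /eqP xn0.
apply: mulr_ge0_le0 => //; apply: mulr_le0_ge0; first exact: ln_le0.
by rewrite invr_ge0 ltW // ln_gt0 // (_ : 1 = 1%:R) // ltr_nat.
Qed.

Lemma le_sum_seq (s : seq R) x : x \in s -> (forall y, y \in s -> 0 <= y) ->
  x <= \sum_(y <- s) y.
Proof.
elim: s => [//|a s IH]; rewrite in_cons big_cons => /orP[/eqP ->|xs] H.
  by rewrite lerDl big_seq sumr_ge0 // => y ys; rewrite H // in_cons ys orbT.
rewrite (le_trans (IH xs _)) ?lerDr ?H ?mem_head //.
by move=> y ys; rewrite H // in_cons ys orbT.
Qed.

Lemma entropy_ge0 n (A : 'M[C]_n.+1) : (forall v, 0 <= form A v) ->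
  (\tr A = 0 \/ \tr A = 1) -> 0 <= vN_entropy A.
Proof.
move=> HA Htr; rewrite /vN_entropy; case: xgetP => [s _ Hs|_]; last by rewrite big_nil oppr0.
have Hs' : spectrum A s by [].
have Hge := spectrum_ge0 HA Hs'.
have Hsum : \sum_(x <- s) x <= 1.
  have := spectrum_trace Hs'; case: Htr => -> Heq.
    by have -> : \sum_(x <- s) x = 0 by apply: rC_inj; rewrite -Heq.
  by have -> : \sum_(x <- s) x = 1 by apply: rC_inj; rewrite -Heq.
rewrite oppr_ge0 big_seq; apply: sumr_le0 => x xs; apply: xlog2x_le0; first exact: Hge.
by rewrite (le_trans _ Hsum) // le_sum_seq.
Qed.


Lemma trace_ptrace1 m n (M : 'M[C]_(m * n)) : \tr (ptrace1 M) = \tr M.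
Proof.
rewrite /mxtrace sum_tens exchange_big; apply: eq_bigr => k _; rewrite mxE.
by [].
Qed.

Lemma cond_term_ge0 m n (psi : 'cV[C]_(m * n.+1)) (E : 'M[C]_m) : psd E ->
  0 <= cond_term (psi *m adjmx psi) E.
Proof.
move=> [_ HE]; rewrite /cond_term /=.
set M := _ *m _; set p := \tr M.
have HP : forall v, 0 <= form (ptrace1 M) v.
  move=> v; rewrite /M ptrace1_formula form_P form_tr; apply: HE.
have Hp : 0 <= p by rewrite /p -trace_ptrace1 psd_trace_ge0.
apply: mulr_ge0.
  by move: Hp; rewrite lecE => /andP[_].
apply: entropy_ge0.
  by move=> v; rewrite formZ mulr_ge0 // invr_ge0.
rewrite mxtraceZ trace_ptrace1 -/p.
have [->|pn0] := eqVneq p 0; first by left; rewrite mulr0.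
by right; rewrite mulVf.
Qed.


Lemma form_rank1_ge0 m (u : 'cV[C]_m) v : 0 <= form (u *m adjmx u) v.
Proof.
rewrite /form -mulmxA -mulmxA mulmxA.
set w := adjmx u *m v.
have -> : adjmx v *m u = adjmx w by rewrite /w adjmxM adjmxK.
rewrite mxE big_ord1 !mxE mulrC; exact: mul_conjC_ge0.
Qed.

Lemma adjmx_delta m (a : 'I_m) : adjmx (delta_mx a 0) = delta_mx 0 a :> 'M[C]_(1, m).
Proof. by apply/matrixP => i j; rewrite !mxE andbC; case: (_ && _); rewrite ?conjC1 ?conjC0. Qed.

Lemma delta_rank1 m (a : 'I_m) :
  delta_mx a a = (delta_mx a (0 : 'I_1) : 'cV[C]_m) *m adjmx (delta_mx a (0 : 'I_1) : 'cV[C]_m).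
Proof. by rewrite adjmx_delta mul_delta_mx. Qed.

Lemma povm_delta m : povm (fun a : 'I_m => delta_mx a a : 'M[C]_m).
Proof.
split.
  move=> a; rewrite delta_rank1; split; last exact: form_rank1_ge0.
  by rewrite adjmxM adjmxK.
apply/matrixP => i j; rewrite summxE !mxE (bigD1 i) //= big1 ?addr0.
  by rewrite !mxE eqxx /= eq_sym.
by move=> a /negbTE Ha; rewrite !mxE eq_sym Ha.
Qed.

Lemma cond_term_rank1 m n (psi : 'cV[C]_(m * n.+1)) (u : 'cV[C]_m) :
  cond_term (psi *m adjmx psi) (u *m adjmx u) = 0.
Proof.
rewrite /cond_term /= ptrace1_formula.
set p := \tr _.
have Htr : \tr ((Psi psi)^T *m (u *m adjmx u)^T *m map_mx Num.conj (Psi psi)) = p.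
  by rewrite /p -trace_ptrace1 ptrace1_formula.
rewrite trmx_mul mulmxA -mulmxA scalemxAl.
rewrite (@entropy_rank1 _ _ _ (if p == 0 then 0 else 1)) ?mulr0 //.
  rewrite -scalemxAl mxtraceZ [X in p^-1 * X](_ : _ = p); last by rewrite -Htr trmx_mul !mulmxA.
  by case: eqP => [->|/eqP pn0]; rewrite ?mulr0 ?mulVf.
by case: eqP; [left|right].
Qed.

Lemma inf_zero m n (psi : 'cV[C]_(m * n.+1)) :
  inf [set x : R | exists k (E : 'I_k -> 'M[C]_m),
                     povm E /\ x = \sum_(a < k) cond_term (psi *m adjmx psi) (E a)] = 0.
Proof.
match goal with |- inf ?X = _ => set S := X end.
have S0 : S 0.
  exists m, (fun a => delta_mx a a); split; first exact: povm_delta.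
  by rewrite big1 // => a _; rewrite delta_rank1 cond_term_rank1.
have lb : lbound S 0.
  move=> x [k [E [[HE _] ->]]]; apply: sumr_ge0 => a _; exact: cond_term_ge0.
apply/eqP; rewrite eq_le; apply/andP; split.
  by apply: (ge_inf (ex_intro _ 0 lb)).
by apply: lb_le_inf => //; exists 0.
Qed.


Lemma rCN (x : R) : rC (- x) = - rC x.
Proof. by apply/eqP; rewrite eq_complex /= oppr0 !eqxx. Qed.
Lemma rCM (x y : R) : rC (x * y) = rC x * rC y.
Proof. by apply/eqP; rewrite eq_complex /= !mulr0 !mul0r subr0 addr0 !eqxx. Qed.
Lemma rC_conj (x : R) : Num.conj (rC x) = rC x.
Proof. by apply/eqP; rewrite eq_complex /= oppr0 !eqxx. Qed.
Lemma rCMn (x : R) k : rC (x *+ k) = rC x *+ k.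
Proof. by elim: k => [|k IH]; rewrite ?mulr0n // !mulrS rCD IH. Qed.

Definition sg (j : nat) : C := if j == 7 then -1 else 1.
Definition al : C := rC (1/8).

Lemma sqrt2_sq : (2 * Num.sqrt (2:R)) * (2 * Num.sqrt 2) = 8.
Proof.
rewrite mulrACA -!expr2 sqr_sqrtr ?ler0n // -natrX -natrM.
by [].
Qed.

Lemma rho1E (i j : 'I_8) : rho1 R i j = sg i * sg j * al.
Proof.
rewrite /rho1 !mxE big_ord1 !mxE rC_conj -rCM /sg /al.
have Hb : (2 * Num.sqrt (2:R)) != 0 by rewrite mulf_neq0 // ?pnatr_eq0 // sqrtr_eq0 -ltNge ltr0n.
rewrite mulf_div sqrt2_sq.
case: (_ == 7); case: (_ == 7); rewrite -?rC1 -?rCN -!rCM; congr rC; lra.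
Qed.


Lemma reorder_sg_gen (s : nat -> nat) :
  (forall i : 'I_8, (reorder_idx s i == 7 :> nat) = (i == 7 :> nat)) ->
  reorder s (rho1 R) = rho1 R.
Proof.
move=> H; apply/matrixP => i j; rewrite mxE !rho1E /sg.
by rewrite !H.
Qed.

Ltac solve_idx := case=> -[|[|[|[|[|[|[|[|//]]]]]]]] Hi;
  rewrite /reorder_idx !big_ord_recl big_ord0 /= inordK //.

Lemma reorder_ABC : reorder ord_ABC (rho1 R) = rho1 R.
Proof. apply: reorder_sg_gen; solve_idx. Qed.
Lemma reorder_BAC : reorder ord_BAC (rho1 R) = rho1 R.
Proof. apply: reorder_sg_gen; solve_idx. Qed.
Lemma reorder_CAB : reorder ord_CAB (rho1 R) = rho1 R.
Proof. apply: reorder_sg_gen; solve_idx. Qed.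
Lemma reorder_ACB : reorder ord_ACB (rho1 R) = rho1 R.
Proof. apply: reorder_sg_gen; solve_idx. Qed.
Lemma reorder_BCA : reorder ord_BCA (rho1 R) = rho1 R.
Proof. apply: reorder_sg_gen; solve_idx. Qed.


Lemma entropy_rho1 : vN_entropy (rho1 R) = 0.
Proof.
rewrite /rho1; apply: (@entropy_rank1 7 _ _ 1); last by right.
rewrite -/(rho1 R) /mxtrace.
under eq_bigr => i _ do rewrite rho1E.
rewrite (_ : rC 1 = al *+ 8); last by rewrite /al -rCMn; congr rC; rewrite -mulr_natr; lra.
rewrite !big_ord_recl big_ord0 /sg /=.
ring.
Qed.


Lemma rC34 : rC (3/4) = al *+ 6.
Proof. by rewrite /al -rCMn; congr rC; rewrite -mulr_natr; lra. Qed.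
Lemma rC14 : rC (1/4) = al *+ 2.
Proof. by rewrite /al -rCMn; congr rC; rewrite -mulr_natr; lra. Qed.

Lemma char24 : char_poly (@ptrace2 R 2 4 (rho1 R)) =
  \prod_(x <- [:: 3/4; 1/4]) ('X - (rC x)%:P).
Proof.
rewrite charpoly2 !mxE !big_ord_recl !big_ord0 !rho1E /sg /=.
rewrite !big_cons big_nil mulr1 rC34 rC14.
rewrite !(polyCD, polyCM, polyCN, polyCMn, polyC1, polyC0).
ring.
Qed.


Lemma ptrace2_pure m n (psi : 'cV[C]_(m * n)) :
  ptrace2 (psi *m adjmx psi) = Psi psi *m adjmx (Psi psi).
Proof.
apply/matrixP => i j; rewrite !mxE; apply: eq_bigr => k _.
by rewrite !mxE big_ord1 !mxE.
Qed.

Lemma adjPsiE m n (psi : 'cV[C]_(m * n)) k l :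
  (adjmx (Psi psi) *m Psi psi) k l =
  \sum_i (psi *m adjmx psi) (mxtens_index (i, l)) (mxtens_index (i, k)).
Proof.
rewrite !mxE; apply: eq_bigr => i _.
by rewrite !mxE big_ord1 !mxE mulrC.
Qed.

Lemma char42 : char_poly (@ptrace2 R 4 2 (rho1 R)) =
  \prod_(x <- [:: 3/4; 1/4; 0; 0]) ('X - (rC x)%:P).
Proof.
rewrite /rho1 ptrace2_pure (@charpoly_dr 2 2 (@Psi 4 2 (psi1 R))) charpoly2 !adjPsiE.
change (psi1 R *m adjmx (psi1 R)) with (rho1 R).
rewrite !big_ord_recl !big_ord0 !rho1E /sg /=.
rewrite !big_cons big_nil mulr1 rC34 rC14 rC0.
rewrite !(polyCD, polyCM, polyCN, polyCMn, polyC1, polyC0).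
ring.
Qed.


Definition vval : R := - (1/4) * log2 (1/4) - (3/4) * log2 (3/4).

Lemma ent_val2 : - \sum_(x <- [:: 3/4; 1/4]) xlog2x x = vval.
Proof.
rewrite !big_cons big_nil /xlog2x /vval.
have -> : (3/4 == 0 :> R) = false by apply: gt_eqF; lra.
have -> : (1/4 == 0 :> R) = false by apply: gt_eqF; lra.
lra.
Qed.

Lemma ent_val4 : - \sum_(x <- [:: 3/4; 1/4; 0; 0]) xlog2x x = vval.
Proof.
rewrite -ent_val2 !big_cons big_nil xlog2x0 !addr0 //.
Qed.

Lemma discord24 : @discord R 2 4 (rho1 R) = vval.
Proof.
have H := @inf_zero 2 3 (psi1 R).
rewrite /discord.
rewrite H.
rewrite (entropy_spec char24) ent_val2.
rewrite entropy_rho1.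
by rewrite add0r subr0.
Qed.

Lemma discord42 : @discord R 4 2 (rho1 R) = vval.
Proof.
have H := @inf_zero 4 1 (psi1 R).
rewrite /discord.
rewrite H.
rewrite (entropy_spec char42) ent_val4.
rewrite entropy_rho1.
by rewrite add0r subr0.
Qed.

End Gen.

Theorem lemma1 (R : realType) :
  let v : R := - (1/4) * log2 (1/4) - (3/4) * log2 (3/4) in
  (* D(B1C1|A1) *) @discord R 2 4 (reorder ord_ABC (rho1 R)) = v /\
  (* D(A1C1|B1) *) @discord R 2 4 (reorder ord_BAC (rho1 R)) = v /\
  (* D(A1B1|C1) *) @discord R 2 4 (reorder ord_CAB (rho1 R)) = v /\
  (* D(C1|A1B1) *) @discord R 4 2 (reorder ord_ABC (rho1 R)) = v /\
  (* D(B1|A1C1) *) @discord R 4 2 (reorder ord_ACB (rho1 R)) = v /\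
  (* D(A1|B1C1) *) @discord R 4 2 (reorder ord_BCA (rho1 R)) = v.
Proof.
move=> v.
rewrite reorder_ABC reorder_BAC reorder_CAB reorder_ACB reorder_BCA.
by rewrite discord24 discord42.
Qed.
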